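(* $\mathsf{AP}(R_1,R_1)=\operatorname{Pol}(R_1,R'_1)=\mathsf{\Omega(1)}$.
   Context: Tuples in $\{0,1\}^4$ are written as strings $abcd$. The relations $R_1,\dots,R_5\subseteq\{0,1\}^4$ are $R_1=\{0000,1000,0100,1100,1010,0110,1001,0101,0011,1011,0111,1111\}$, $R_2=\{0000,1000,0100,1100,1010,0101,0011,1111\}$, $R_3=\{0000,1100,1010,0101,0011,1011,0111,1111\}$, $R_4=\{0000,1100,1010,0101,0011,1111\}$, $R_5=\{0000,1100,1010,0110,1001,0101,0011,1111\}$. For $R,S\subseteq\{0,1\}^4$, a Boolean function $f\colon\{0,1\}^n\to\{0,1\}$ is analogy-preserving relative to $(R,S)$ if for all $\mathbf{a},\mathbf{b},\mathbf{c},\mathbf{d}\in\{0,1\}^n$ with $(a_i,b_i,c_i,d_i)\in R$ for every $i$ and such that $(f(\mathbf{a}),f(\mathbf{b}),f(\mathbf{c}),x)\in S$ for some $x\in\{0,1\}$, we have $(f(\mathbf{a}),f(\mathbf{b}),f(\mathbf{c}),f(\mathbf{d}))\in S$; $\mathsf{AP}(R,S)$ is the set of all such functions of all arities. $S':=S\cup\{(a,b,c,d)\mid\nexists x\colon(a,b,c,x)\in S\}$, and $\operatorname{Pol}(R,S)$ is the set of Boolean functions $f$ with $f(\mathbf{a}_1,\dots,\mathbf{a}_n)\in S$ (componentwise) for all $\mathbf{a}_1,\dots,\mathbf{a}_n\in R$. $\mathsf{\Omega(1)}$ is the set of all Boolean functions (of all arities) that are constant, a projection, or the negation of a projection. *)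

(* Defs.v *)
From mathcomp Require Import all_boot.
Set Implicit Arguments. Unset Strict Implicit. Unset Printing Implicit Defensive.

Definition quad := (bool * bool * bool * bool)%type.

Definition qd (a b c d : nat) : quad := (a == 1, b == 1, c == 1, d == 1).

Definition rel4 := quad -> bool.

Definition R1 : rel4 := fun t => t \in
  [:: qd 0 0 0 0; qd 1 0 0 0; qd 0 1 0 0; qd 1 1 0 0; qd 1 0 1 0; qd 0 1 1 0;
      qd 1 0 0 1; qd 0 1 0 1; qd 0 0 1 1; qd 1 0 1 1; qd 0 1 1 1; qd 1 1 1 1].

Definition boolfun (n : nat) := {ffun 'I_n -> bool} -> bool.

Definition AP (R S : rel4) (n : nat) (f : boolfun n) : Prop :=
  forall a b c d : {ffun 'I_n -> bool},
    (forall i : 'I_n, R (a i, b i, c i, d i)) ->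
    (exists x : bool, S (f a, f b, f c, x)) ->
    S (f a, f b, f c, f d).

Definition relPrime (S : rel4) : rel4 :=
  fun t => let: (a, b, c, d) := t in
    S (a, b, c, d) || ~~ [exists x : bool, S (a, b, c, x)].

(* Pol(R,S): f applied componentwise to any n tuples of R lands in S.
   The n tuples a_1..a_n ∈ R are given by their four coordinate rows
   a, b, c, d : {0,1}^n, i.e. a_i = (a i, b i, c i, d i). *)
Definition Pol (R S : rel4) (n : nat) (f : boolfun n) : Prop :=
  forall a b c d : {ffun 'I_n -> bool},
    (forall i : 'I_n, R (a i, b i, c i, d i)) ->
    S (f a, f b, f c, f d).

Definition Omega1 (n : nat) (f : boolfun n) : Prop :=
  (exists c : bool, forall x, f x = c) \/
  (exists i : 'I_n, forall x, f x = x i) \/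
  (exists i : 'I_n, forall x, f x = ~~ x i).

(* Main.v *)
Require Import Defs.
From mathcomp Require Import all_boot.

Lemma R1E (a b c d : bool) : R1 (a, b, c, d) = (a != b) || (c == d).
Proof. by case: a; case: b; case: c; case: d. Qed.

Lemma relPrimeE (a b c d : bool) : relPrime R1 (a, b, c, d) = R1 (a, b, c, d).
Proof.
rewrite /relPrime.
have -> : [exists x : bool, R1 (a, b, c, x)] by apply/existsP; exists c; rewrite R1E eqxx orbT.
by rewrite orbF.
Qed.

Lemma chain (g : nat -> bool) n : g 0 != g n -> exists2 k, k < n & g k != g k.+1.
Proof.
elim: n => [|n IH] H; first by rewrite eqxx in H.
case E: (g n == g n.+1).
  have [k kn gk] : exists2 k, k < n & g k != g k.+1.
    by apply: IH; rewrite (eqP E).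
  by exists k => //; apply: ltnW.
by exists n => //; rewrite E.
Qed.

Section S.
Variables (n : nat) (f : boolfun n).
Hypothesis L : forall a b c d : {ffun 'I_n -> bool},
  (forall i, a i = b i -> c i = d i) -> f a = f b -> f c = f d.

Lemma key (p q : {ffun 'I_n -> bool}) (i : 'I_n) :
  f p != f q -> (forall j, j != i -> p j = q j) ->
  forall x : {ffun 'I_n -> bool}, x i = p i -> f x = f p.
Proof.
move=> fpq hpq x xi; apply/eqP; apply/negPn/negP => fx.
have fxq : f x = f q by move: fx fpq; case: (f x); case: (f p); case: (f q).
have hj : forall j, x j = q j -> p j = q j.
  move=> j; case: (eqVneq j i) => [->|ji]; last by rewrite hpq.
  by rewrite xi.
by have e := @L x q p q hj fxq; rewrite e eqxx in fpq.
Qed.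
End S.

Theorem mainTheorem7 :
  forall (n : nat) (f : boolfun n),
    (AP R1 R1 f <-> Pol R1 (relPrime R1) f) /\
    (Pol R1 (relPrime R1) f <-> Omega1 f).
Proof.
move=> n f.
have PP : Pol R1 (relPrime R1) f <-> Pol R1 R1 f.
  by split=> H a b c d h; move: (H a b c d h); rewrite relPrimeE.
split.
  apply: (iff_trans _ (iff_sym PP)); split=> H a b c d h.
    apply: H => //; exists (f c); by rewrite R1E eqxx orbT.
  by move=> _; apply: H.
apply: (iff_trans PP); split.
  move=> H.
  have L : forall a b c d : {ffun 'I_n -> bool},
      (forall i, a i = b i -> c i = d i) -> f a = f b -> f c = f d.
    move=> a b c d h e; have := H a b c d.
    rewrite R1E e eqxx /= => h2; apply/eqP; apply: h2 => i.
    rewrite R1E; case: eqP => //= /h ->; exact: eqxx.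
  pose z : {ffun 'I_n -> bool} := [ffun => false].
  case: (boolP [forall x, f x == f z]) => [/forallP hc|].
    by left; exists (f z) => x; apply/eqP.
  move=> /forallPn [y fy].
  pose w k : {ffun 'I_n -> bool} := [ffun j : 'I_n => if j < k then y j else false].
  have w0 : w 0 = z by apply/ffunP => j; rewrite !ffunE.
  have wn : w n = y by apply/ffunP => j; rewrite !ffunE ltn_ord.
  have [k kn hk] : exists2 k, k < n & f (w k) != f (w k.+1).
    apply: (@chain (fun k => f (w k))); by rewrite w0 wn eq_sym.
  pose i : 'I_n := Ordinal kn.
  have hd : forall j, j != i -> w k j = w k.+1 j.
    move=> j ji; rewrite !ffunE ltnS (leq_eqVlt j k).
    suff -> : (nat_of_ord j == k) = false by [].
    by apply/negbTE; move: ji; apply: contra => /eqP e; apply/eqP/val_inj.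
  have K1 := @key n f L _ _ _ hk hd.
  have hk' : f (w k.+1) != f (w k) by rewrite eq_sym.
  have K2 := @key n f L _ _ _ hk' (fun j ji => esym (hd j ji)).
  have wki : w k i = false by rewrite ffunE ltnn.
  have wk1 : w k.+1 i = y i by rewrite ffunE ltnSn.
  have yi : y i = true.
    apply/negPn/negP => /negbTE yi; move: hk; rewrite -[w k.+1]/(w k.+1).
    have -> : w k.+1 = w k; last by rewrite eqxx.
    apply/ffunP => j; case: (eqVneq j i) => [->|ji]; first by rewrite wki wk1 yi.
    by rewrite hd.
  have fneg : f (w k.+1) = ~~ f (w k) by move: hk; case: (f (w k)); case: (f (w k.+1)).
  right; case E: (f (w k)).
    right; exists i => x; case xi: (x i).
      by rewrite K2 ?fneg ?E // wk1 yi.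
    by rewrite K1 ?E // wki.
  left; exists i => x; case xi: (x i).
    by rewrite K2 ?fneg ?E // wk1 yi.
  by rewrite K1 ?E // wki.
case=> [[c hc]|[[i hi]|[i hi]]] a b c' d h.
- by rewrite !hc R1E eqxx orbT.
- by rewrite !hi; have := h i; rewrite !R1E.
- by rewrite !hi; have := h i; rewrite !R1E; case: (a i); case: (b i); case: (c' i); case: (d i).
Qed.
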